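(* Let $\mathcal{I}$ be an interval hypergraph on $[n]$ closed under intersection. Then the map $(i,j)\mapsto A_{ij}$ is a bijection from $\mathcal{IJ}_{\mathcal{I}}$ to the set of join irreducible elements of the lattice $P_{\mathcal{I}}$.
   Context: An interval hypergraph $\mathcal{I}$ on $[n]$ is a collection of intervals of $[n]$ containing all singletons; it is closed under intersection if $I,J\in\mathcal{I}$, $I\cap J\ne\varnothing$ imply $I\cap J\in\mathcal{I}$. An orientation is a map $O:\mathcal{I}\to[n]$ with $O(I)\in I$; it is acyclic if there are no $H_1,\dots,H_k$, $k\ge2$, with $O(H_{i+1})\in H_i\setminus\{O(H_i)\}$ for $i\in[k-1]$ and $O(H_1)\in H_k\setminus\{O(H_k)\}$. Orientations $O\ne O'$ are related by an increasing flip (from $O$ to $O'$) if there exist $1\le i<j\le n$ such that for all $H$: if $O(H)\ne O'(H)$ then $O(H)=i$, $O'(H)=j$; and if $\{i,j\}\subseteq H$ then $O(H)=i\iff O'(H)=j$. $P_{\mathcal{I}}$ is the transitive closure of the increasing flip relation on acyclic orientations (a lattice here). For $1\le i<j\le n$ such that some $I\in\mathcal{I}$ contains $\{i,j\}$, let $J_{ij}=\bigcap\{I\in\mathcal{I}:\{i,j\}\subseteq I\}$ and $\mu_{ij}=\min J_{ij}$. Let $\mathcal{IJ}_{\mathcal{I}}$ be the set of such pairs $(i,j)$ satisfying \[ i=\max\Big([\mu_{ij},j[\ \setminus\bigcup_{J\in\mathcal{I},\ J\subseteq[\mu_{ij},j[}\big(J\setminus\{\min J\}\big)\Big). \] For $(i,j)\in\mathcal{IJ}_{\mathcal{I}}$,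 $A_{ij}$ is the orientation with $A_{ij}(J)=j$ if $j\in J$ and $\min J\ge\mu_{ij}$, and $A_{ij}(J)=\min J$ otherwise (equivalently $A_{ij}=\mathrm{Or}_\pi$ for $\pi=1\cdots(\mu_{ij}-1)\,j\,\mu_{ij}\cdots(j-1)\,(j+1)\cdots n$, where $\mathrm{Or}_\pi(I)=\pi(\min\{k:\pi(k)\in I\})$). An element of a lattice is join irreducible if it is not the minimum and covers exactly one element. *)

(* Defs.v *)
(* Ground set [n] is rendered as 'I_n = {0,...,n-1}
   (an order-preserving relabelling of {1,...,n}). *)
From Stdlib Require Import Relations.
From mathcomp Require Import all_boot all_order.
Set Implicit Arguments. Unset Strict Implicit. Unset Printing Implicit Defensive.

Section Defs.
Variable n : nat.

Definition is_interval (A : {set 'I_n}) : bool :=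
  (A != set0) &&
  [forall x, forall y : 'I_n, forall z,
     (x \in A) && (z \in A) && (x <= y <= z)%N ==> (y \in A)].

Definition interval_hypergraph (I : {set {set 'I_n}}) : Prop :=
  (forall H, H \in I -> is_interval H) /\ (forall x : 'I_n, [set x] \in I).

Definition closed_under_intersection (I : {set {set 'I_n}}) : Prop :=
  forall H J, H \in I -> J \in I -> H :&: J != set0 -> H :&: J \in I.

Variable I : {set {set 'I_n}}.

Notation edge := {H : {set 'I_n} | H \in I}.

Definition omapI := {ffun edge -> 'I_n}.

Definition is_orientation (O : omapI) : Prop := forall H : edge, O H \in val H.

Definition arc (O : omapI) (H H' : edge) : bool :=
  (O H' \in val H) && (O H' != O H).

(* acyclic: no H_1,...,H_k (k >= 2) with O(H_{i+1}) \in H_i \ {O(H_i)}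
   and O(H_1) \in H_k \ {O(H_k)}; mathcomp's [cycle] checks exactly
   arc H_1 H_2, ..., arc H_{k-1} H_k, arc H_k H_1. *)
Definition acyclic (O : omapI) : Prop :=
  ~ exists s : seq edge, (2 <= size s)%N /\ cycle (arc O) s.

Definition acyclic_orientation (O : omapI) : Prop :=
  is_orientation O /\ acyclic O.

Definition increasing_flip (O O' : omapI) : Prop :=
  O <> O' /\
  exists i j : 'I_n, (i < j)%N /\
    forall H : edge,
      (O H != O' H -> O H = i /\ O' H = j) /\
      ((i \in val H) && (j \in val H) -> (O H = i <-> O' H = j)).

Definition acyclic_flip (O O' : omapI) : Prop :=
  acyclic_orientation O /\ acyclic_orientation O' /\ increasing_flip O O'.

Definition Ple (O O' : omapI) : Prop := clos_refl_trans omapI acyclic_flip O O'.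

Definition Plt (O O' : omapI) : Prop := Ple O O' /\ O <> O'.

Definition covers (O O' : omapI) : Prop :=
  acyclic_orientation O /\ acyclic_orientation O' /\ Plt O' O /\
  ~ exists O'', acyclic_orientation O'' /\ Plt O' O'' /\ Plt O'' O.

Definition is_minimum (O : omapI) : Prop :=
  acyclic_orientation O /\ forall O', acyclic_orientation O' -> Ple O O'.

Definition join_irreducible (O : omapI) : Prop :=
  acyclic_orientation O /\ ~ is_minimum O /\
  exists! O', covers O O'.

Definition minS (A : {set 'I_n}) : nat := \big[minn/n]_(x in A) (x : nat).

Definition Jij (i j : 'I_n) : {set 'I_n} :=
  \bigcap_(H in I | (i \in H) && (j \in H)) H.

Definition mu (i j : 'I_n) : nat := minS (Jij i j).

Definition IJset (i j : 'I_n) : {set 'I_n} :=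
  let R := [set x : 'I_n | (mu i j <= x < j)%N] in
  R :\: \bigcup_(J in I | J \subset R) (J :\: [set x : 'I_n | (x : nat) == minS J]).

Definition IJ : {set 'I_n * 'I_n} :=
  [set p : 'I_n * 'I_n | [&& (p.1 < p.2)%N,
              [exists H in I, (p.1 \in H) && (p.2 \in H)] &
              (p.1 : nat) == \max_(x in IJset p.1 p.2) (x : nat)]].

Definition A (i j : 'I_n) : omapI :=
  [ffun H : edge =>
     if (j \in val H) && (mu i j <= minS (val H))%N then j
     else insubd j (minS (val H))].

End Defs.

Arguments omapI [n] I.

(* Main.v *)
Require Import Defs.
From Stdlib Require Import Relations Classical.
From mathcomp Require Import all_boot all_order zify.
Set Implicit Arguments. Unset Strict Implicit. Unset Printing Implicit Defensive.

Section Main.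
Variable n : nat.
Variable I : {set {set 'I_n}}.
Hypothesis hI : interval_hypergraph I.
Hypothesis hC : closed_under_intersection I.

Notation edge := {H : {set 'I_n} | H \in I}.
Notation omap := (omapI I).

Lemma interval_mem (H : {set 'I_n}) : is_interval H ->
  forall x y z : 'I_n, x \in H -> z \in H -> (x <= y <= z)%N -> y \in H.
Proof.
move=> /andP[_ /forallP h] x y z hx hz hxyz.
by move: (h x) => /forallP /(_ y) /forallP /(_ z) /implyP; apply; rewrite hx hz.
Qed.

Lemma edge_int (H : edge) : is_interval (val H).
Proof. by case: hI => h _; apply: h; exact: (valP H). Qed.

Lemma edge_mem (H : edge) (x y z : 'I_n) : x \in val H -> z \in val H -> (x <= y <= z)%N -> y \in val H.
Proof. by move=> hx hz hy; apply: (interval_mem (edge_int H) hx hz hy). Qed.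

Lemma edge_n0 (H : edge) : val H != set0.
Proof. by case/andP: (edge_int H). Qed.

Lemma minS_le (B : {set 'I_n}) (x : 'I_n) : x \in B -> (minS B <= x)%N.
Proof.
move=> hx; rewrite /minS.
have : x \in index_enum 'I_n by rewrite mem_index_enum.
elim: (index_enum _) => [//|a l IH]; rewrite big_cons inE => /orP[/eqP<-|hl].
  by rewrite hx geq_minl.
by case: ifP => _; [rewrite geq_min IH ?orbT|rewrite IH].
Qed.

Lemma minS_mem (B : {set 'I_n}) : B != set0 -> exists2 x : 'I_n, x \in B & (x : nat) = minS B.
Proof.
case/set0Pn => y hy.
have : (minS B == n) || [exists x in B, (x : nat) == minS B].
  rewrite /minS; apply: (big_rec (fun m => (m == n) || [exists x in B, (x : nat) == m])) => [|i m hi /orP[/eqP->|/existsP[x /andP[hx /eqP hxm]]]].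
  - by rewrite eqxx.
  - by apply/orP; right; apply/existsP; exists i; rewrite hi /=; apply/eqP; have := ltn_ord i; lia.
  - case: (leqP i m) => him.
    + by apply/orP; right; apply/existsP; exists i; rewrite hi /=; apply/eqP; lia.
    + by apply/orP; right; apply/existsP; exists x; rewrite hx /=; apply/eqP; lia.
case/orP=> [/eqP h|/existsP[x /andP[hx /eqP hxm]]]; last by exists x.
have := minS_le hy; have := ltn_ord y; lia.
Qed.

Definition mn (H : edge) := minS (val H).

Lemma mn_le (H : edge) x : x \in val H -> (mn H <= x)%N.
Proof. exact: minS_le. Qed.

Lemma mn_mem (H : edge) : exists2 x : 'I_n, x \in val H & (x : nat) = mn H.
Proof. exact: minS_mem (edge_n0 H). Qed.

Lemma mn_lt (H : edge) : (mn H < n)%N.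
Proof. by case: (mn_mem H) => x _ <-. Qed.

Lemma mnE (H : edge) (x : 'I_n) : x \in val H -> (x : nat) = mn H -> x = insubd x (mn H).
Proof. by move=> _ e; apply: val_inj; rewrite /= val_insubd mn_lt. Qed.

Lemma val_insubd_mn (H : edge) (x : 'I_n) : val (insubd x (mn H)) = mn H.
Proof. by rewrite val_insubd mn_lt. Qed.

Definition mkE (H : {set 'I_n}) (h : H \in I) : edge := exist _ H h.

Lemma singE (x : 'I_n) : [set x] \in I.
Proof. by case: hI => _ h; exact: h. Qed.

Lemma interE (H K : edge) : val H :&: val K != set0 -> val H :&: val K \in I.
Proof. by move=> h; apply: hC => //; [exact: (valP H)|exact: (valP K)]. Qed.


Lemma path_cons' (T : Type) (e : rel T) (x y : T) p : path e x (y :: p) = e x y && path e y p.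
Proof. by []. Qed.

Definition local (O : omap) := forall H K : edge, val K \subset val H -> O H \in val K -> O K = O H.

Lemma inter_edge (H K : edge) (x : 'I_n) : x \in val H -> x \in val K ->
  {M : edge | val M = val H :&: val K}.
Proof.
move=> hx hy; have h : val H :&: val K != set0 by apply/set0Pn; exists x; rewrite inE hx hy.
by exists (mkE (interE h)).
Qed.

Lemma arc_notin (O : omap) H K : is_orientation O -> local O -> Defs.arc O H K -> O H \notin val K.
Proof.
move=> ho hl /andP[hKH hne]; apply/negP => hHK.
have [M hM] := inter_edge hKH (ho K).
have e1 : O M = O H by apply: hl; rewrite ?hM ?subsetIl // inE ho hHK.
have e2 : O M = O K by apply: hl; rewrite ?hM ?subsetIr // inE hKH ho.
by move: hne; rewrite -e1 -e2 eqxx.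
Qed.

Lemma shortcut (O : omap) H1 H2 H3 : is_orientation O -> local O ->
  Defs.arc O H1 H2 -> Defs.arc O H2 H3 -> (O H1 <= O H2)%N -> (O H3 <= O H2)%N -> Defs.arc O H1 H3.
Proof.
move=> ho hl a12 a23 l1 l3.
have n12 := arc_notin ho hl a12.
move: a12 a23 => /andP[h21 ne21] /andP[h32 ne32].
have lt1 : (O H1 < O H2)%N by rewrite ltn_neqAle l1 andbT; apply: contra ne21 => /eqP/val_inj ->.
have lt3 : (O H3 < O H2)%N by rewrite ltn_neqAle l3 andbT; apply: contra ne32 => /eqP/val_inj ->.
have lt13 : (O H1 < O H3)%N.
  rewrite ltnNge; apply/negP => h31; move/negP: n12; apply.
  by apply: (edge_mem h32 (ho H2)); apply/andP; split; [exact: h31|exact: ltnW].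
apply/andP; split.
  by apply: (edge_mem (ho H1) h21); apply/andP; split; exact: ltnW.
by apply/negP => /eqP e; move: lt13; rewrite e ltnn.
Qed.

Lemma local_acyclic (O : omap) : is_orientation O -> local O -> acyclic O.
Proof.
move=> ho hl [s [hs hc]].
suff H : forall k (s : seq edge), size s = k.+1 -> cycle (Defs.arc O) s -> False.
  by case: s hs hc => // x s' _; apply: H.
elim=> [|k IH] {s hs hc} s hs hc.
  case: s hs hc => [|x [|//]] //= _; by rewrite /Defs.arc eqxx andbF.
case: s hs hc => [//|x0 s0] hs hc.
set s := x0 :: s0 in hs hc.
have x0s : x0 \in s by rewrite inE eqxx.
case: (@arg_maxnP _ x0 (fun y => y \in s) (fun y => O y) x0s) => x xs xmax.
case: (rot_to xs) => i t hrot.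
have hc' : cycle (Defs.arc O) (x :: t) by rewrite -hrot rot_cycle.
have ht : size t = k.+1 by move: hs; rewrite -(size_rot i s) hrot /= => -[].
have memt y : y \in t -> y \in s by move=> hy; rewrite -(mem_rot i) hrot inE hy orbT.
case: t hrot hc' ht memt => [//|z t] _ hc' ht memt.
change (is_true (path (Defs.arc O) x (z :: rcons t x))) in hc'.
rewrite path_cons' rcons_path in hc'; case/and3P: hc' => axz hp ayx.
apply: (IH (z :: t)) => //.
change (is_true (path (Defs.arc O) z (rcons t z))); rewrite rcons_path hp andTb.
apply: (shortcut ho hl ayx axz); apply: xmax; apply: memt; rewrite ?inE ?eqxx //.
exact: mem_last.
Qed.

Lemma acyclic_local (O : omap) : is_orientation O -> acyclic O -> local O.
Proof.
move=> ho ha H K hKH hHK; case: (O K =P O H) => // hne; exfalso; apply: ha.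
have ne1 : O K != O H by apply/eqP.
exists [:: H; K]; split => //.
by rewrite /= /Defs.arc hHK (subsetP hKH _ (ho K)) ne1 eq_sym ne1.
Qed.


Definition pw (O O' : omap) := forall H, (O H <= O' H)%N.

Lemma flip_pw (O O' : omap) : increasing_flip O O' -> pw O O'.
Proof.
case=> _ [i [j [hij h]]] H; case: (h H) => h1 _.
case: (O H =P O' H) => [->//|/eqP ne]; case: (h1 ne) => -> ->; exact: ltnW.
Qed.

Lemma Ple_pw (O O' : omap) : Ple O O' -> pw O O'.
Proof.
elim=> [x y [_ [_ f]]|x|x y z _ h1 _ h2] H; first exact: flip_pw.
  by [].
exact: leq_trans (h1 H) (h2 H).
Qed.

Definition wt (O : omap) := \sum_(H : edge) (O H : nat).

Lemma wt_lt (O O' : omap) : pw O O' -> O <> O' -> (wt O < wt O')%N.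
Proof.
move=> hp hne.
have [H hH] : exists H, O H != O' H.
  apply: NNPP => hn; apply: hne; apply/ffunP => H.
  by apply/eqP; apply: negbNE; apply/negP => h; apply: hn; exists H.
rewrite /wt (bigD1 H) //= [X in (_ < X)%N](bigD1 H) //=.
have h1 : (O H < O' H)%N by rewrite ltn_neqAle hp andbT; apply: contra hH => /eqP/val_inj ->.
have h2 : (\sum_(i | i != H) (O i : nat) <= \sum_(i | i != H) (O' i : nat))%N by apply: leq_sum => i _; exact: hp.
by rewrite -addSn leq_add.
Qed.

Lemma rt1n_last (O C : omap) : clos_refl_trans omap (@acyclic_flip n I) C O -> C <> O ->
  exists2 Y, clos_refl_trans omap (@acyclic_flip n I) C Y & acyclic_flip Y O.
Proof.
move=> h hne; have h' := clos_rt_rtn1 _ _ _ _ h.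
destruct h' as [|Y Z hYO hCY]; first by [].
exists Y => //; exact: clos_rtn1_rt.
Qed.

Lemma cover_flip (O C : omap) : covers O C -> acyclic_flip C O.
Proof.
case=> aO [aC [[hCO hne] hno]].
case: (rt1n_last hCO hne) => Y hCY hYO.
case: (classic (C = Y)) => [->//|hCY'].
exfalso; apply: hno; exists Y; split; first by case: hYO.
split; split => //; first exact: rt_step.
by case: hYO => _ [_ [hne' _]].
Qed.

Lemma cover_above (O Q : omap) : acyclic_orientation Q -> Plt Q O ->
  exists C, covers O C /\ Ple Q C.
Proof.
move=> aQ hQO.
have aO : acyclic_orientation O.
  case: hQO => h hne; case: (rt1n_last h hne) => Y _ [_ [h' _]]; exact: h'.
suff: forall k R, (wt O - wt R <= k)%N -> acyclic_orientation R -> Ple Q R -> Plt R O ->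
  exists C, covers O C /\ Ple Q C.
  by move=> h; apply: (h _ Q (leqnn _)) => //; exact: rt_refl.
elim=> [|k IH] R hk aR hQR hRO.
  have := wt_lt (Ple_pw hRO.1) hRO.2; lia.
case: (classic (exists R', acyclic_orientation R' /\ Plt R R' /\ Plt R' O)) => [[R' [aR' [hRR' hR'O]]]|hno].
  apply: (IH R') => //; last exact: rt_trans hQR hRR'.1.
  have := wt_lt (Ple_pw hRR'.1) hRR'.2; have := wt_lt (Ple_pw hR'O.1) hR'O.2; lia.
by exists R; split => //; split => //; split.
Qed.

Definition down (O : omap) (a b : 'I_n) : omap :=
  [ffun H : edge => if [&& a \in val H, b \in val H & O H == b] then a else O H].

Lemma down_orient (O : omap) a b : is_orientation O -> is_orientation (down O a b).
Proof. by move=> ho; rewrite /is_orientation => H; rewrite ffunE; case: ifP => [/and3P[]|] //. Qed.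

Lemma down_local (O : omap) (a b : 'I_n) : is_orientation O -> local O ->
  (forall H L : edge, O H = b -> a \in val H -> val L \subset val H -> a \in val L ->
     b \notin val L -> O L = a) ->
  local (down O a b).
Proof.
move=> ho hl hyp H K hKH; rewrite !ffunE.
case: ifP => [/and3P[aH bH /eqP OH]|cH]; case: ifP => [/and3P[aK bK /eqP OK]|cK] //.
- move=> aK; case: (boolP (b \in val K)) => bK.
    have e : O K = O H by apply: (hl H K hKH); rewrite OH.
    by move: cK; rewrite aK bK e OH eqxx.
  exact: (hyp H K).
- move=> OHK; have e := hl H K hKH OHK.
  by move: cH; rewrite (subsetP hKH _ aK) (subsetP hKH _ bK) -e OK eqxx.
- move=> OHK; exact: hl.
Qed.

Lemma down_flip (O : omap) (a b : 'I_n) (H0 : edge) : is_orientation O -> (a < b)%N ->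
  (forall H : edge, a \in val H -> b \in val H -> O H != a) ->
  a \in val H0 -> b \in val H0 -> O H0 = b ->
  increasing_flip (down O a b) O.
Proof.
move=> ho ab hna aH0 bH0 OH0; split.
  move/ffunP => /(_ H0); rewrite ffunE aH0 bH0 OH0 eqxx /= => e.
  by move: ab; rewrite e ltnn.
exists a, b; split => // H; rewrite ffunE; split.
  by case: ifP => [/and3P[_ _ /eqP]|]; [|rewrite eqxx].
move=> /andP[aH bH]; rewrite aH bH /=; case: ifP => [/eqP->|/negbT ne]; first by split.
split => [e|e]; last by move: ne; rewrite e eqxx.
by move: (hna H aH bH); rewrite e eqxx.
Qed.

Lemma flip_form (Q O : omap) : is_orientation Q -> is_orientation O -> increasing_flip Q O ->
  exists a b : 'I_n, [/\ (a < b)%N, Q = down O a b,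
     (forall H : edge, a \in val H -> b \in val H -> O H != a) &
     exists H0 : edge, [/\ a \in val H0, b \in val H0 & O H0 = b]].
Proof.
move=> hQ hO [hne [a [b [ab h]]]].
have eQ : Q = down O a b.
  apply/ffunP => H; rewrite ffunE; case: (h H) => h1 h2.
  case: (Q H =P O H) => [e|/eqP ne].
    case: ifP => // /and3P[aH bH /eqP OH].
    have := (proj2 (h2 (introT andP (conj aH bH)))) OH; rewrite e OH => e'.
    by move: ab; rewrite e' ltnn.
  case: (h1 ne) => QH OH.
  have aH : a \in val H by rewrite -QH hQ.
  have bH : b \in val H by rewrite -OH hO.
  by rewrite QH OH aH bH eqxx.
exists a, b; split => //.
- move=> H aH bH; apply/eqP => OH; case: (h H) => _ /(_ (introT andP (conj aH bH))) [h3 _].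
  have : Q H = a by rewrite eQ ffunE aH bH OH; case: eqP => // e; move: ab; rewrite -e OH ltnn.
  by move/h3 => e; move: ab; rewrite -e OH ltnn.
- have [H hH] : exists H, Q H != O H.
    apply: NNPP => hn; apply: hne; apply/ffunP => H.
    by apply/eqP; apply: negbNE; apply/negP => h'; apply: hn; exists H.
  case: (h H) => /(_ hH) [QH OH] _; exists H; split => //; rewrite -?QH -?OH //.
Qed.


Lemma arc_irr (O : omap) L : ~~ Defs.arc O L L.
Proof. by rewrite /Defs.arc eqxx andbF. Qed.

Lemma acyc_init (O : omap) (P : pred edge) (L1 : edge) : acyclic O -> P L1 ->
  exists2 L0, P L0 & forall L, P L -> ~~ Defs.arc O L L0.
Proof.
move=> ha PL1.
pose e := [rel x y : edge | [&& P x, P y & Defs.arc O x y]].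
pose anc (L : edge) := [set L' | [exists L'', e L' L'' && connect e L'' L]].
have noloop L : L \notin anc L.
  rewrite inE; apply/negP => /existsP[L'' /andP[eLL /connectP[p hp hl]]].
  apply: ha; exists (L'' :: p); split.
    case: p hp hl => [|x p] //= _ e0; move: eLL; rewrite /e /= -e0.
    by rewrite (negbTE (arc_irr O L)) !andbF.
  change (is_true (path (Defs.arc O) L'' (rcons p L''))).
  rewrite rcons_path -hl; apply/andP; split.
    by apply: sub_path hp => x y /and3P[].
  by case/and3P: eLL.
case: (@arg_minnP _ L1 P (fun L => #|anc L|) PL1) => L0 PL0 hmin.
exists L0 => // L PL; apply/negP => aLL0.
have eLL0 : e L L0 by rewrite /= PL PL0 aLL0.
have : #|anc L| < #|anc L0|.
  apply: proper_card; apply/properP; split.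
    apply/subsetP => L' /[!inE] /existsP[L'' /andP[e1 c1]].
    apply/existsP; exists L''; rewrite e1 /=.
    apply: (connect_trans c1); exact: connect1.
  exists L; last exact: noloop.
  by rewrite inE; apply/existsP; exists L0; rewrite eLL0 connect0.
by rewrite ltnNge hmin.
Qed.


Lemma no_two_vals (O : omap) (H K : edge) (x : 'I_n) : is_orientation O -> local O ->
  O H \in val K -> O K \in val H -> O H = O K.
Proof.
move=> ho hl hHK hKH.
have [M hM] := inter_edge (ho H) hHK.
have e1 : O M = O H by apply: hl; rewrite ?hM ?subsetIl // inE ho hHK.
have e2 : O M = O K by apply: hl; rewrite ?hM ?subsetIr // inE hKH ho.
by rewrite -e1 e2.
Qed.

Lemma exists_down (O : omap) (H0 : edge) : acyclic_orientation O -> (mn H0 < O H0)%N ->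
  exists a : 'I_n, [/\ (a < O H0)%N, acyclic_orientation (down O a (O H0)) &
                      increasing_flip (down O a (O H0)) O].
Proof.
move=> [ho ha] hlt; have hl := acyclic_local ho ha.
set v := O H0 in hlt *.
pose P (L : edge) := [&& [exists H, (O H == v) && (val L \subset val H)], v \notin val L &
   [forall x in val L, (x < v)%N]].
case: (mn_mem H0) => xm xmH xmE.
pose L1 := mkE (singE xm).
have PL1 : P L1.
  apply/and3P; split.
  - by apply/existsP; exists H0; rewrite eqxx /= sub1set.
  - by rewrite /= inE; apply/eqP => e; move: hlt; rewrite -xmE e ltnn.
  - by apply/forallP => x; apply/implyP; rewrite /= inE => /eqP->; rewrite xmE.
case: (@acyc_init O P L1 ha PL1) => L0 /and3P[/existsP[H1 /andP[/eqP OH1 sub1]] vL0 /forallP lt0] hL0.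
set a := O L0.
have aL0 : a \in val L0 by exact: ho.
have av : (a < v)%N by move: (lt0 a); rewrite aL0.
have aH1 : a \in val H1 by exact: (subsetP sub1).
have vH1 : v \in val H1 by rewrite -OH1 ho.
have src (H L : edge) : O H = v -> a \in val H -> val L \subset val H -> a \in val L -> v \notin val L -> O L = a.
  move=> OH aH sLH aL vL.
  have PL : P L.
    apply/and3P; split => //.
    - by apply/existsP; exists H; rewrite OH eqxx.
    - apply/forallP => x; apply/implyP => xL; rewrite ltnNge; apply/negP => vx.
      move/negP: vL; apply; apply: (edge_mem aL xL); rewrite vx andbT; exact: ltnW.
  have := hL0 L PL; rewrite /Defs.arc aL /= negbK => /eqP e; exact/esym.
have hl' : local (down O a v) by apply: down_local.
have ho' : is_orientation (down O a v) by apply: down_orient.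
exists a; split => //; first by split => //; exact: local_acyclic.
apply: (down_flip (H0 := H1)) => // H aH vH; apply/eqP => OH.
have := @no_two_vals O H H1 a ho hl; rewrite OH OH1 => /(_ aH1 vH) e.
by move: av; rewrite e ltnn.
Qed.


Definition Bf (mu : nat) (j : 'I_n) : omap :=
  [ffun H : edge => if (j \in val H) && (mu <= minS (val H))%N then j else insubd j (minS (val H))].

Lemma A_Bf (i j : 'I_n) : A I i j = Bf (mu I i j) j.
Proof. by []. Qed.

Lemma Bf_val mu j (H : edge) :
  (Bf mu j H : nat) = if (j \in val H) && (mu <= mn H)%N then (j : nat) else mn H.
Proof. by rewrite ffunE /mn; case: ifP => // _; rewrite val_insubd_mn. Qed.

Lemma mn_sub (H K : edge) : val K \subset val H -> (mn H <= mn K)%N.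
Proof. by case: (mn_mem K) => x xK <-; move=> s; apply: mn_le; exact: (subsetP s). Qed.


Lemma Bf_orient mu j : is_orientation (Bf mu j).
Proof.
rewrite /is_orientation => H; rewrite ffunE; case: ifP => [/andP[]//|_].
by case: (mn_mem H) => x xH e; rewrite (_ : insubd j _ = x) //; apply: val_inj; rewrite val_insubd_mn.
Qed.

Lemma Bf_local mu j : local (Bf mu j).
Proof.
move=> H K sKH; have ho := @Bf_orient mu j.
move=> hin; apply: ord_inj; rewrite !Bf_val.
have le := mn_sub sKH.
move: hin; rewrite ffunE; case: ifP => [/andP[jH muH] jK|cH].
  by rewrite jK (leq_trans muH le).
rewrite -/(mn H) => hK.
have e : mn K = mn H.
  apply/eqP; rewrite eqn_leq le andbT.
  by have := mn_le hK; rewrite val_insubd_mn.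
case: ifP => //; rewrite e => /andP[jK muK].
by move: cH; rewrite (subsetP sKH _ jK) muK.
Qed.

Lemma Bf_acyc mu j : acyclic_orientation (Bf mu j).
Proof. split; [exact: Bf_orient | apply: local_acyclic; [exact: Bf_orient|exact: Bf_local]]. Qed.

Definition RR (mu : nat) (j : 'I_n) := [set x : 'I_n | (mu <= x < j)%N].

Definition Sset (mu : nat) (j : 'I_n) : {set 'I_n} :=
  RR mu j :\: \bigcup_(J in I | J \subset RR mu j) (J :\: [set x : 'I_n | (x : nat) == minS J]).

Lemma IJset_S (i j : 'I_n) : IJset I i j = Sset (mu I i j) j.
Proof. by []. Qed.

Lemma Sset_range (mu : nat) (j x : 'I_n) : x \in Sset mu j -> (mu <= x < j)%N.
Proof. by rewrite inE => /andP[_]; rewrite inE. Qed.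

Lemma Sset_min (mu : nat) (j x : 'I_n) (L : edge) : x \in Sset mu j -> val L \subset RR mu j -> x \in val L -> (x : nat) = mn L.
Proof.
rewrite inE => /andP[/bigcupP hn _] sL xL; apply: NNPP => hne; apply: hn.
exists (val L); first by rewrite (valP L) sL.
by rewrite !inE xL andbT; apply/eqP.
Qed.

Lemma Sset_intro (mu : nat) (j : 'I_n) (x : 'I_n) : (mu <= x < j)%N ->
  (forall L : edge, val L \subset RR mu j -> x \in val L -> (x : nat) = mn L) -> x \in Sset mu j.
Proof.
move=> hr hL; rewrite inE [x \in RR _ _]inE hr andbT; apply/bigcupP => -[J /andP[JI sJ]].
by rewrite !inE => /andP[/eqP ne xJ]; apply: ne; exact: (hL (mkE JI)).
Qed.

Lemma Sset_notin (mu : nat) (j : 'I_n) (x : 'I_n) : (mu <= x < j)%N -> x \notin Sset mu j ->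
  exists L : edge, [/\ val L \subset RR mu j, x \in val L & (x : nat) != mn L].
Proof.
move=> hr hn; apply: NNPP => hno; move/negP: hn; apply; apply: Sset_intro => // L sL xL.
by apply/eqP; apply: negbNE; apply/negP => h; apply: hno; exists L.
Qed.

Lemma RR_sub (mu : nat) (j : 'I_n) (L : edge) : (forall y : 'I_n, y \in val L -> (mu <= y < j)%N) -> val L \subset RR mu j.
Proof. by move=> h; apply/subsetP => y yL; rewrite inE h. Qed.

Lemma RR_P (mu : nat) (j : 'I_n) (L : edge) (y : 'I_n) : val L \subset RR mu j -> y \in val L -> (mu <= y < j)%N.
Proof. by move=> s yL; move: (subsetP s _ yL); rewrite inE. Qed.

Lemma Jij_props (i j : 'I_n) (H0 : edge) : i \in val H0 -> j \in val H0 ->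
  exists E : edge, [/\ val E = Jij I i j, i \in val E, j \in val E &
     forall H : edge, i \in val H -> j \in val H -> val E \subset val H].
Proof.
move=> iH0 jH0.
have sub : forall H : {set 'I_n}, H \in I -> i \in H -> j \in H -> Jij I i j \subset H.
  by move=> H HI iH jH; apply: (bigcap_inf H); rewrite HI iH jH.
have inI : Jij I i j \in I.
  have : (val H0 :&: Jij I i j \in I) && (i \in Jij I i j) && (j \in Jij I i j).
    rewrite /Jij.
    apply: (big_rec (fun X => (val H0 :&: X \in I) && (i \in X) && (j \in X))) => [|H X /andP[HI /andP[iH jH]] /andP[/andP[hX iX] jX]].
      by rewrite setIT (valP H0) !inE.
    rewrite setICA !inE iH jH iX jX !andbT; apply: hC => //; apply/set0Pn; exists i.
    by rewrite !inE iH iX iH0.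
  by case/andP => /andP[h iJ] jJ; move: h; rewrite (setIidPr (sub _ (valP H0) iH0 jH0)).
have ij : (i \in Jij I i j) && (j \in Jij I i j).
  by apply/andP; split; apply/bigcapP => H /andP[_ /andP[]].
case/andP: ij => iJ jJ.
exists (mkE inI); split => // H iH jH; exact: (sub _ (valP H) iH jH).
Qed.


Lemma Bf_j (mu : nat) (j : 'I_n) (H : edge) : j \in val H -> (mu <= mn H)%N -> Bf mu j H = j.
Proof. by move=> jH mH; rewrite ffunE jH mH. Qed.

Lemma Bf_m (mu : nat) (j : 'I_n) (H : edge) : ~~ ((j \in val H) && (mu <= mn H)%N) -> (Bf mu j H : nat) = mn H.
Proof. by move=> c; rewrite Bf_val (negbTE c). Qed.

Lemma Bf_cases (mu : nat) (j : 'I_n) (H : edge) :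
  (Bf mu j H = j /\ (j \in val H) && (mu <= mn H)%N) \/
  ((Bf mu j H : nat) = mn H /\ ~~ ((j \in val H) && (mu <= mn H)%N)).
Proof.
case: (boolP ((j \in val H) && (mu <= mn H)%N)) => c.
  by left; split => //; case/andP: c => jH mH; exact: Bf_j.
by right; split => //; exact: Bf_m.
Qed.

Section BfK0.
Variables (mu : nat) (j : 'I_n) (K0 : edge).
Hypotheses (jK0 : j \in val K0) (mK0 : mn K0 = mu) (muj : (mu < j)%N).

Lemma K0_mem (y : 'I_n) : (mu <= y <= j)%N -> y \in val K0.
Proof.
case: (mn_mem K0) => xm xmK e hy; apply: (edge_mem xmK jK0); by rewrite e mK0.
Qed.

Lemma RR_K0 (L : edge) : val L \subset RR mu j -> val L \subset val K0.
Proof.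
move=> s; apply/subsetP => y yL; apply: K0_mem; have := RR_P s yL; case/andP=> h1 h2.
by rewrite h1 ltnW.
Qed.

Lemma mn_RR (L : edge) : val L \subset RR mu j -> (mu <= mn L)%N.
Proof. by case: (mn_mem L) => x xL <- s; case/andP: (RR_P s xL). Qed.

Lemma mu_in_S : exists2 xmu : 'I_n, xmu \in Sset mu j & (xmu : nat) = mu.
Proof.
case: (mn_mem K0) => xm xmK e; rewrite mK0 in e; exists xm => //.
apply: Sset_intro; first by rewrite e leqnn.
move=> L sL xL; apply/eqP; rewrite eqn_leq mn_le // e mn_RR //.
Qed.

Lemma in_RR (H L : edge) (a : 'I_n) : (mu <= mn H)%N -> val L \subset val H -> a \in val L -> (a < j)%N ->
  j \notin val L -> val L \subset RR mu j.
Proof.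
move=> mH sLH aL aj jL; apply: RR_sub => y yL.
rewrite (leq_trans mH (mn_le (subsetP sLH _ yL))) /=.
rewrite ltnNge; apply/negP => jy; move/negP: jL; apply; apply: (edge_mem aL yL).
by rewrite jy andbT ltnW.
Qed.

Lemma B1 (a : 'I_n) : a \in Sset mu j ->
  acyclic_orientation (down (Bf mu j) a j) /\ increasing_flip (down (Bf mu j) a j) (Bf mu j).
Proof.
move=> aS; have /andP[mua aj] := Sset_range aS.
have ho := @Bf_orient mu j; have hl := @Bf_local mu j.
have ho' := down_orient a j ho.
have hl' : local (down (Bf mu j) a j).
  apply: down_local => // H L OH aH sLH aL jL.
  have mH : (mu <= mn H)%N.
    case: (Bf_cases mu j H) => [[_ /andP[]]//|[e _]].
    by move: (mn_le aH) aj; rewrite -e OH => l1 l2; have := leq_ltn_trans l1 l2; rewrite ltnn.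
  have sL := in_RR mH sLH aL aj jL.
  apply: ord_inj; rewrite Bf_m ?(Sset_min aS sL aL) //.
  by rewrite (negbTE jL).
split; first by split => //; exact: local_acyclic.
apply: (down_flip (H0 := K0)) => //.
- move=> H aH jH; apply/eqP => e.
  case: (Bf_cases mu j H) => [[e' _]|[e' c]].
    by move: aj; rewrite -e e' ltnn.
  move: c; rewrite jH /= -ltnNge => lt.
  have ea : (a : nat) = mn H by rewrite -e e'.
  by move: lt mua; rewrite ea; lia.
- by apply: K0_mem; rewrite mua ltnW.
- by apply: Bf_j; rewrite ?mK0.
Qed.

Lemma B2 (C : omap) : acyclic_orientation C -> increasing_flip C (Bf mu j) ->
  exists2 a, a \in Sset mu j & C = down (Bf mu j) a j.
Proof.
move=> [hoC haC] fl.
case: (flip_form hoC (@Bf_orient mu j) fl) => a [b [ab eC hna [H0 [aH0 bH0 OH0]]]].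
have bj : b = j.
  case: (Bf_cases mu j H0) => [[e _]|[e _]]; first by rewrite -OH0 e.
  by move: (mn_le aH0) ab; rewrite -e OH0 => l1 l2; have := leq_ltn_trans l1 l2; rewrite ltnn.
rewrite {}bj in ab eC hna bH0 OH0.
have mH0 : (mu <= mn H0)%N.
  case: (Bf_cases mu j H0) => [[_ /andP[]]//|[e _]].
  by move: (mn_le aH0) ab; rewrite -e OH0 => l1 l2; have := leq_ltn_trans l1 l2; rewrite ltnn.
have mua : (mu <= a)%N by exact: leq_trans mH0 (mn_le aH0).
exists a => //.
apply: Sset_intro; first by rewrite mua ab.
move=> L sL aL.
have hlC := acyclic_local hoC haC.
have CK0 : C K0 = a.
  rewrite eC ffunE K0_mem ?jK0 ?(Bf_j jK0) ?mK0 ?eqxx //.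
  by rewrite mua ltnW.
have jL : j \notin val L by apply/negP => jL; have := RR_P sL jL; rewrite ltnn andbF.
have : C L = a by rewrite -CK0; apply: hlC; [exact: RR_K0|rewrite CK0].
rewrite eC ffunE (negbTE jL) andbF /= => e.
by rewrite -e Bf_m // (negbTE jL).
Qed.

End BfK0.

Lemma ffun_neq (f g : omap) : f <> g -> exists H, f H != g H.
Proof.
move=> hne; apply: NNPP => hn; apply: hne; apply/ffunP => H.
by apply/eqP; apply: negbNE; apply/negP => h; apply: hn; exists H.
Qed.

Lemma down_neq (O : omap) (a b : 'I_n) (H : edge) : down O a b H != O H -> O H = b.
Proof. by rewrite ffunE; case: ifP => [/and3P[_ _ /eqP]//|]; rewrite eqxx. Qed.

Lemma downE (O : omap) (a b : 'I_n) (H : edge) :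
  down O a b H = if [&& a \in val H, b \in val H & O H == b] then a else O H.
Proof. by rewrite ffunE. Qed.

Lemma down_in (O : omap) (a b : 'I_n) (H : edge) : a \in val H -> b \in val H -> O H = b -> down O a b H = a.
Proof. by move=> aH bH OH; rewrite ffunE aH bH OH eqxx. Qed.

Lemma down_out (O : omap) (a b : 'I_n) (H : edge) : ~~ [&& a \in val H, b \in val H & O H == b] -> down O a b H = O H.
Proof. by move=> c; rewrite ffunE (negbTE c). Qed.

Lemma Plt_flip (Q O : omap) : acyclic_orientation Q -> acyclic_orientation O -> increasing_flip Q O -> Plt Q O.
Proof. by move=> aQ aO f; split; [apply: rt_step | case: f]. Qed.

Lemma JI_is_A (O : omap) : join_irreducible O -> exists2 p, p \in IJ I & O = A I p.1 p.2.
Proof.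
case=> aO [_ [O' [cO' uO]]].
have [ho ha] := aO; have hl := acyclic_local ho ha.
have [H1 hH1] : exists H, (mn H < O H)%N.
  apply: NNPP => hno; case: cO' => _ [[hoO' _] [[hle hne] _]]; apply: hne.
  apply/ffunP => H; apply: ord_inj; apply/eqP; rewrite eqn_leq (Ple_pw hle H) /=.
  have : ~~ (mn H < O H)%N by apply/negP => h; apply: hno; exists H.
  by rewrite -leqNgt => h; apply: leq_trans h (mn_le (hoO' H)).
case: (@arg_maxnP _ H1 (fun H => mn H < O H)%N (fun H => O H) hH1) => Hj hHj jmax.
set j := O Hj in hHj jmax.
case: (@arg_minnP _ Hj (fun H => O H == j) (fun H => mn H) (eqxx _)) => K0 /eqP OK0 K0min.
set m0 := mn K0 in K0min.
have muj : (m0 < j)%N := leq_ltn_trans (K0min Hj (eqxx _)) hHj.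
have jK0 : j \in val K0 by rewrite -OK0 ho.
have mK0 : mn K0 = m0 by [].
have stepj (H : edge) : j \in val H -> (m0 <= mn H)%N -> O H = j.
  move=> jH mH.
  have le : (O H <= j)%N.
    case: (ltnP (mn H) (O H)) => c; first exact: jmax.
    exact: leq_trans c (mn_le jH).
  have OHK : O H \in val K0 by apply: (K0_mem jK0 mK0); rewrite (leq_trans mH (mn_le (ho H))) le.
  by rewrite -OK0; apply: (no_two_vals j ho hl OHK); rewrite OK0.
have stepm (H : edge) : ~~ ((j \in val H) && (m0 <= mn H)%N) -> (O H : nat) = mn H.
  move=> c; apply/eqP; rewrite eqn_leq mn_le ?ho // andbT leqNgt; apply/negP => lt.
  have vj : O H != j.
    by apply/eqP => e; move/negP: c; apply; rewrite -e ho /=; apply: K0min; rewrite e.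
  case: (exists_down aO lt) => a1 [_ aQ1 fQ1].
  case: (exists_down aO hHj) => a2 [_ aQ2 fQ2].
  case: (cover_above aQ1 (Plt_flip aQ1 aO fQ1)) => C1 [cC1 hQC1].
  case: (cover_above aQ2 (Plt_flip aQ2 aO fQ2)) => C2 [cC2 hQC2].
  have e1 := uO C1 cC1; have e2 := uO C2 cC2.
  case: cO' => _ [_ [[hO'O hne] _]].
  case: (ffun_neq hne) => Hs hHs.
  have lts : (O' Hs < O Hs)%N.
    by rewrite ltn_neqAle (Ple_pw hO'O Hs) andbT; apply: contra hHs => /eqP/val_inj ->.
  have d1 : down O a1 (O H) Hs != O Hs.
    apply/eqP => ee; move: (Ple_pw hQC1 Hs); rewrite -e1 ee => l.
    by have := leq_ltn_trans l lts; rewrite ltnn.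
  have d2 : down O a2 (O Hj) Hs != O Hs.
    apply/eqP => ee; move: (Ple_pw hQC2 Hs); rewrite -e2 ee => l.
    by have := leq_ltn_trans l lts; rewrite ltnn.
  by move: vj; rewrite -(down_neq d1) (down_neq d2) eqxx.
have eO : O = Bf m0 j.
  apply/ffunP => H; apply: ord_inj; rewrite Bf_val.
  case: ifP => c; last exact: stepm (negbT c).
  by case/andP: c => jH mH; rewrite stepj.
rewrite eO in cO' uO; clear stepj stepm.
rewrite eO; clear eO.
have aB := Bf_acyc m0 j.
case: (mu_in_S mK0 muj) => xmu xmuS xmuE.
have ne : (0 < #|Sset m0 j|)%N by apply/card_gt0P; exists xmu.
case: (eq_bigmax_cond (fun x : 'I_n => (x : nat)) ne) => i iS imax.
have /andP[mui ij] := Sset_range iS.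
case: (B1 jK0 mK0 muj iS) => aQi fQi.
case: (cover_above aQi (Plt_flip aQi aB fQi)) => C [cC hQiC].
have [aC [_ fC]] := cover_flip cC.
case: (B2 jK0 mK0 aC fC) => a aS eC.
have /andP[mua aj] := Sset_range aS.
have ai : (a <= i)%N by rewrite -imax; exact: leq_bigmax_cond.
have iK0 : i \in val K0 by apply: (K0_mem jK0 mK0); rewrite mui ltnW.
have aK0 : a \in val K0 by apply: (K0_mem jK0 mK0); rewrite mua ltnW.
have BK0 : Bf m0 j K0 = j by apply: Bf_j; rewrite ?mK0.
have ia : (i <= a)%N by have := Ple_pw hQiC K0; rewrite eC !down_in.
have eai : a = i by apply: ord_inj; apply/eqP; rewrite eqn_leq ai ia.
have cQi : covers (Bf m0 j) (down (Bf m0 j) i j) by rewrite -eai -eC.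
case: (B1 jK0 mK0 muj xmuS) => aQm fQm.
case: (cover_above aQm (Plt_flip aQm aB fQm)) => C' [cC' hQmC'].
have eC' : C' = down (Bf m0 j) i j by rewrite -(uO C' cC') (uO _ cQi).
rewrite eC' in hQmC'.
case: (Jij_props iK0 jK0) => E [eE iE jE Emin].
have mE : (m0 <= mn E)%N by rewrite -mK0; apply: mn_sub; apply: Emin.
have BE : Bf m0 j E = j by apply: Bf_j.
have xE : xmu \in val E.
  apply: negbNE; apply/negP => xE.
  have := Ple_pw hQmC' E; rewrite (down_in iE jE BE) down_out ?BE; last by rewrite (negbTE xE).
  by rewrite leqNgt ij.
have muE : mu I i j = m0.
  rewrite /mu -eE -/(mn E); apply/eqP; rewrite eqn_leq mE andbT -xmuE; exact: mn_le.
exists (i, j); last by rewrite /= A_Bf muE.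
rewrite inE /= ij /=; apply/andP; split.
  by apply/existsP; exists (val K0); rewrite (valP K0) iK0 jK0.
by rewrite IJset_S muE imax eqxx.
Qed.

Lemma IJ_facts (i j : 'I_n) : (i, j) \in IJ I ->
  exists E : edge, [/\ i \in val E, j \in val E,
     forall H : edge, i \in val H -> j \in val H -> val E \subset val H,
     mn E = mu I i j & (i < j)%N /\ (i : nat) = \max_(x in Sset (mu I i j) j) x].
Proof.
rewrite inE /= => /and3P[ij /existsP[H0 /andP[H0I /andP[iH0 jH0]]] /eqP imax].
case: (@Jij_props i j (mkE H0I) iH0 jH0) => E [eE iE jE Emin].
by exists E; split => //; rewrite /mn eE.
Qed.

Lemma A_JI (i j : 'I_n) : (i, j) \in IJ I -> join_irreducible (A I i j).
Proof.
move=> /IJ_facts [E [iE jE Emin mE [ij imax]]].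
rewrite A_Bf; set m0 := mu I i j in mE imax *.
have mui : (m0 <= i)%N by rewrite -mE; exact: mn_le.
have muj : (m0 < j)%N := leq_ltn_trans mui ij.
have aB := Bf_acyc m0 j.
have [hoB _] := aB; have hlB := @Bf_local m0 j.
case: (mu_in_S mE muj) => xmu xmuS _.
have ne : (0 < #|Sset m0 j|)%N by apply/card_gt0P; exists xmu.
case: (eq_bigmax_cond (fun x : 'I_n => (x : nat)) ne) => i' i'S e'.
have iS : i \in Sset m0 j by rewrite (_ : i = i') //; apply: ord_inj; rewrite imax e'.
have maxS x : x \in Sset m0 j -> (x <= i)%N by move=> xS; rewrite imax; exact: leq_bigmax_cond.
have BE : Bf m0 j E = j by apply: Bf_j; rewrite ?mE.
have E_mem := K0_mem jE mE.
case: (B1 jE mE muj iS) => aQ fQ.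
set Q := down (Bf m0 j) i j in aQ fQ *.
have cQ : covers (Bf m0 j) Q.
  split => //; split => //; split; first exact: Plt_flip.
  move=> [R [[hoR haR] [[hQR neQR] [hRB neRB]]]].
  have hlR := acyclic_local hoR haR.
  have bnds (H : edge) : [&& i \in val H, j \in val H & Bf m0 j H == j] ->
      (i <= R H <= j)%N.
    move=> /and3P[iH jH /eqP BH].
    have := Ple_pw hQR H; rewrite /Q (down_in iH jH BH) => ->.
    by have := Ple_pw hRB H; rewrite BH.
  have key (H : edge) : [&& i \in val H, j \in val H & Bf m0 j H == j] -> R H = R E.
    move=> c; have /andP[l1 l2] := bnds H c; case/and3P: c => iH jH _.
    have RHE : R H \in val E by apply: E_mem; rewrite (leq_trans mui l1) l2.
    exact: (esym (hlR H E (Emin H iH jH) RHE)).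
  have out (H : edge) : ~~ [&& i \in val H, j \in val H & Bf m0 j H == j] -> R H = Bf m0 j H.
    move=> c; apply: ord_inj; apply/eqP; rewrite eqn_leq (Ple_pw hRB H) andTb.
    by have := Ple_pw hQR H; rewrite /Q (down_out c).
  have cE : [&& i \in val E, j \in val E & Bf m0 j E == j] by rewrite iE jE BE eqxx.
  have /andP[l1 l2] := bnds E cE.
  case: (boolP (R E == i)) => [/eqP vi|vi].
    apply: neQR; apply/ffunP => H; case: (boolP [&& i \in val H, j \in val H & Bf m0 j H == j]) => c.
      by rewrite (key H c) vi /Q ffunE c.
    by rewrite (out H c) /Q ffunE (negbTE c).
  case: (boolP (R E == j)) => [/eqP vj|vj].
    apply: neRB; apply/ffunP => H; case: (boolP [&& i \in val H, j \in val H & Bf m0 j H == j]) => c.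
      by rewrite (key H c) vj; case/and3P: c => _ _ /eqP.
    exact: out.
  have iv : (i < R E)%N by rewrite ltn_neqAle l1 andbT; apply: contra vi => /eqP h; apply/eqP/ord_inj.
  have vj' : (R E < j)%N by rewrite ltn_neqAle l2 andbT; apply: contra vj => /eqP h; apply/eqP/ord_inj.
  have vS : R E \notin Sset m0 j by apply/negP => /maxS; rewrite leqNgt iv.
  have rng : (m0 <= R E < j)%N by rewrite (leq_trans mui (ltnW iv)) vj'.
  case: (Sset_notin rng vS) => L [sL vL vne].
  have sLE : val L \subset val E := RR_K0 jE mE sL.
  have RL : R L = R E := hlR E L sLE vL.
  have jL : j \notin val L by apply/negP => jL; have := RR_P sL jL; rewrite ltnn andbF.
  have cL : ~~ [&& i \in val L, j \in val L & Bf m0 j L == j] by rewrite (negbTE jL) andbF.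
  move: vne; rewrite -RL (out L cL) Bf_m ?eqxx //.
  by rewrite (negbTE jL).
split => //; split.
  move=> [_ hmin]; have := Ple_pw (hmin _ (Bf_acyc n j)) E.
  rewrite BE Bf_val; have := mn_lt E; rewrite ltnNge => /negbTE ->; rewrite andbF mE.
  by rewrite leqNgt muj.
exists Q; split => // O'' cO''.
have [aO'' [_ fO'']] := cover_flip cO''.
case: (B2 jE mE aO'' fO'') => a aS eO''.
have ai := maxS a aS.
case: (ltngtP a i) => [lt|gt|e]; [|by move: ai; rewrite leqNgt gt|by rewrite eO'' /Q; congr down; apply: ord_inj].
exfalso; case: cO'' => _ [_ [_ hno]]; apply: hno; exists Q; split => //; split; last exact: Plt_flip.
have /andP[mua aj] := Sset_range aS.
apply: Plt_flip => //; rewrite eO''.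
have aE : a \in val E by apply: E_mem; rewrite mua ltnW.
split.
  move/ffunP => /(_ E); rewrite (down_in aE jE BE) (down_in iE jE BE) => e.
  by move: lt; rewrite e ltnn.
exists a, i; split => // H.
have ceq : [&& a \in val H, j \in val H & Bf m0 j H == j] = [&& i \in val H, j \in val H & Bf m0 j H == j].
  apply/idP/idP => /and3P[xH jH BH]; rewrite jH BH !andbT.
    by apply: (edge_mem xH jH); rewrite (ltnW lt) ltnW.
  exact: (subsetP (Emin H xH jH) a aE).
rewrite !downE ceq; case: ifP => c.
  by split => //; split.
split; first by rewrite eqxx.
move=> /andP[aH iH].
have nB : Bf m0 j H != a /\ Bf m0 j H != i.
  case: (Bf_cases m0 j H) => [[e _]|[e cc]].
    rewrite e; split; apply/eqP => h; [move: aj|move: ij]; rewrite h ltnn //.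
  split; apply/eqP => h.
    have sH : val H \subset RR m0 j.
      apply: (@in_RR m0 j H H a) => //.
        by move: e; rewrite h => <-.
      by apply/negP => jH; move: cc; rewrite jH /= -e h mua.
    have := Sset_min iS sH iH; rewrite -e h => ei.
    by move: lt; rewrite ei ltnn.
  by move: (mn_le aH) lt; rewrite -e h => l1 l2; have := leq_ltn_trans l1 l2; rewrite ltnn.
by case: nB => n1 n2; split => h; [move: n1|move: n2]; rewrite h eqxx.
Qed.

Lemma A_inj (i j i' j' : 'I_n) : (i, j) \in IJ I -> (i', j') \in IJ I ->
  A I i j = A I i' j' -> (i, j) = (i', j').
Proof.
move=> /IJ_facts [E [iE jE Emin mE [ij imax]]] /IJ_facts [E' [iE' jE' Emin' mE' [ij' imax']]].
rewrite !A_Bf => eA.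
have side (m1 m2 : nat) (j1 j2 i1 : 'I_n) (E1 : edge) : j1 \in val E1 -> mn E1 = m1 -> (m1 <= i1)%N ->
    (i1 < j1)%N -> Bf m1 j1 = Bf m2 j2 -> j1 = j2 /\ (m2 <= m1)%N.
  move=> jE1 mE1 mi1 ij1 eB.
  have : Bf m2 j2 E1 = j1 by rewrite -eB; apply: Bf_j; rewrite ?mE1.
  case: (Bf_cases m2 j2 E1) => [[-> /andP[_ h]]|[e _]].
    by move=> ->; split => //; rewrite -mE1.
  move=> ej; move: e; rewrite ej mE1 => e.
  by move: (leq_ltn_trans mi1 ij1); rewrite -e ltnn.
have mi : (mu I i j <= i)%N by rewrite -mE; exact: mn_le.
have mi' : (mu I i' j' <= i')%N by rewrite -mE'; exact: mn_le.
case: (side _ _ _ _ _ _ jE mE mi ij eA) => ejj l1.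
case: (side _ _ _ _ _ _ jE' mE' mi' ij' (esym eA)) => _ l2.
have em : mu I i j = mu I i' j' by apply/eqP; rewrite eqn_leq l1 l2.
rewrite -ejj in em imax' *.
suff -> : i = i' by [].
by apply: ord_inj; rewrite imax imax' em.
Qed.

End Main.

Theorem proposition6p21 (n : nat) (I : {set {set 'I_n}}) :
  interval_hypergraph I -> closed_under_intersection I ->
  [/\ (forall p, p \in IJ I -> join_irreducible (A I p.1 p.2)),
      {in IJ I &, injective (fun p => A I p.1 p.2)} &
      (forall O : omapI I, join_irreducible O ->
         exists2 p, p \in IJ I & O = A I p.1 p.2)].
Proof.
move=> hI hC; split.
- by move=> [i j] h; eapply A_JI; eauto.
- by move=> [i j] [i' j'] h1 h2 /= e; eapply A_inj; eauto.
- by move=> O h; eapply JI_is_A; eauto.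
Qed.
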